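(* Let $p$ be prime and $H\le\mathrm{S}_n$ be in $\mathfrak{InP}(\mathrm{C}_p)$, let $\gamma$ be as in the context, and let $M$ be a generator matrix of $\gamma(H)$. For orbit indices $i,j$, let $a_i$ and $a_j$ be the first non-zero entries of the columns $M_{*,i}$ and $M_{*,j}$ respectively. Then $\Omega_i\equiv_H\Omega_j$ if and only if $a_i^{-1}M_{*,i}=a_j^{-1}M_{*,j}$.
   Context: $H\le\mathrm{S}_{n}$, $n=pk$, has orbits $\Omega_1,\dots,\Omega_k$ of size $p$ with each $G_i:=H|_{\Omega_i}$ cyclic of order $p$; $G=G_1\times\dots\times G_k$, $g_1$ generates $G_1$, $g_i$ is the conjugate of $g_1$ by the involution swapping $\Omega_1$ and $\Omega_i$ via a bijection witnessing a permutation isomorphism from $G_1$ to $G_i$, and $\gamma:G\to\mathbb{F}_p^k$ is $\gamma(g_1^{r_1}\cdots g_k^{r_k})=(r_1,\dots,r_k)$. A generator matrix of $\gamma(H)$ is a matrix whose rows form a basis of $\gamma(H)$. $\Omega_i\equiv_H\Omega_j$ means there is a bijection $\psi:\Omega_i\to\Omega_j$ with $\psi(\delta^h)=\psi(\delta)^h$ for all $h\in H$, $\delta\in\Omega_i$. *)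

(* Defs.v *)
From mathcomp Require Import all_boot all_order all_algebra all_fingroup all_solvable.
Set Implicit Arguments. Unset Strict Implicit. Unset Printing Implicit Defensive.
Import GRing.Theory.

(* Restriction (transitive constituent) H|_A of a permutation group H to an
   H-invariant set A, realised as a group of permutations of 'I_n supported on A. *)
Definition constituent (n : nat) (H : {group {perm 'I_n}}) (A : {set 'I_n})
  : {set {perm 'I_n}} := (restr_perm A @* H)%g.

Definition orbit_equiv (n : nat) (H : {group {perm 'I_n}}) (A B : {set 'I_n}) : Prop :=
  exists psi : 'I_n -> 'I_n,
    [/\ {in A &, injective psi}, psi @: A = B &
        forall h, h \in H -> {in A, forall d, psi (h d) = h (psi d)}].

(* gamma(H) = { gamma(h) | h in H } where gamma (g_1^r_1 ... g_k^r_k) = (r_1,...,r_k);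
   equivalently the set of r with g_1^r_1 ... g_k^r_k in H. *)
Definition gammaH (p n k : nat) (H : {group {perm 'I_n}}) (g : 'I_k -> {perm 'I_n})
  : {set 'rV['F_p]_k} :=
  [set r : 'rV['F_p]_k | (\prod_(i < k) (g i ^+ (nat_of_ord (r ord0 i))))%g \in H].

(* first non-zero entry of a column vector (0 if the column is zero) *)
Definition first_nz (F : fieldType) (m : nat) (c : 'cV[F]_m) : F :=
  head 0%R [seq x <- [seq c r ord0 | r <- enum 'I_m] | x != 0%R].

(* Main.v *)
Require Import Defs.
From mathcomp Require Import all_boot all_order all_algebra all_fingroup all_solvable.
Import GRing.Theory.
From mathcomp Require Import ring.
Set Implicit Arguments. Unset Strict Implicit.

Section LA.
Local Open Scope ring_scope.
Lemma first_nz0 (F : fieldType) m (c : 'cV[F]_m) : first_nz c = 0 -> c = 0.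
Proof.
rewrite /first_nz; case E: [seq _ <- _ | _] => [|x s] /=.
  move=> _; apply/matrixP => r j; rewrite !mxE (ord1 j).
  apply/eqP; apply/negPn/negP => nz.
  have : c r ord0 \in [seq x <- [seq c r0 ord0 | r0 <- enum 'I_m] | x != 0].
    by rewrite mem_filter nz /=; apply/mapP; exists r; rewrite ?mem_enum.
  by rewrite E.
move=> x0; have : x \in [seq x <- [seq c r0 ord0 | r0 <- enum 'I_m] | x != 0].
  by rewrite E mem_head.
by rewrite mem_filter x0 eqxx.
Qed.

Lemma first_nzZ (F : fieldType) m (c : 'cV[F]_m) a : a != 0 ->
  first_nz (a *: c) = a * first_nz c.
Proof.
move=> a0; rewrite /first_nz.
have -> : [seq (a *: c) r ord0 | r <- enum 'I_m] = map ( *%R a) [seq c r ord0 | r <- enum 'I_m].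
  by elim: (enum _) => //= r s ->; rewrite mxE.
rewrite filter_map.
rewrite (@eq_filter _ _ (fun x => x != 0)); last by move=> x /=; rewrite mulf_eq0 (negbTE a0).
by case: [seq _ <- _ | _] => [|x s] /=; rewrite ?mulr0.
Qed.

Lemma normZ (F : fieldType) m (c : 'cV[F]_m) a : a != 0 ->
  (first_nz (a *: c))^-1 *: (a *: c) = (first_nz c)^-1 *: c.
Proof. by move=> a0; rewrite first_nzZ // scalerA invfM mulrAC mulVf // mul1r. Qed.

Lemma first_nz_neq0 (F : fieldType) m (c : 'cV[F]_m) : c != 0 -> first_nz c != 0.
Proof. by move=> c0; apply/eqP => /first_nz0 /eqP; rewrite (negbTE c0). Qed.

Lemma norm_eq_prop (F : fieldType) m (c d : 'cV[F]_m) :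
  ((first_nz c)^-1 *: c = (first_nz d)^-1 *: d) <->
  (exists2 l, l != 0 & d = l *: c).
Proof.
split; last by case=> l l0 ->; rewrite normZ.
have key : forall c d : 'cV[F]_m, (first_nz c)^-1 *: c = (first_nz d)^-1 *: d ->
    c = 0 -> d = 0.
  move=> c' d' E c0; move: E; rewrite c0 scaler0 => /esym/eqP.
  rewrite scaler_eq0 invr_eq0 => /orP[/eqP/first_nz0|/eqP] //.
move=> E; have [c0|c0] := eqVneq c 0.
  by exists 1; rewrite ?oner_eq0 // (key _ _ E c0) c0 scaler0.
have [d0|d0] := eqVneq d 0; first by move: c0; rewrite (key _ _ (esym E) d0) eqxx.
exists (first_nz d / first_nz c).
  by rewrite mulf_neq0 ?invr_eq0 ?first_nz_neq0.
by rewrite -scalerA E scalerA mulfV ?scale1r ?first_nz_neq0.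
Qed.

Lemma ann_prop (F : fieldType) m (c d : 'cV[F]_m) :
  (exists2 l, l != 0 & d = l *: c) <->
  (forall u : 'rV_m, (u *m c == 0) = (u *m d == 0)).
Proof.
split.
  by case=> l l0 -> u; rewrite -scalemxAr scaler_eq0 (negbTE l0).
move=> A.
have rowd : forall r, (row r c == 0) = (row r d == 0) by move=> r; rewrite !rowE A.
have m11 : forall x : 'M[F]_(1,1), (x == 0) = (x ord0 ord0 == 0).
  move=> x; apply/eqP/eqP => [->|x0]; first by rewrite mxE.
  by apply/matrixP => a b; rewrite (ord1 a) (ord1 b) x0 mxE.
have [c0|c0] := eqVneq c 0.
  exists 1; rewrite ?oner_eq0 // c0 scaler0; apply/matrixP => r j.
  have := rowd r; rewrite c0 linear0 eqxx => /esym/eqP/matrixP/(_ ord0 j).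
  by rewrite !mxE.
have [r0 cr0] : exists r, c r ord0 != 0.
  apply/existsP; apply: contraNT c0 => /existsPn H0; apply/eqP/matrixP => r j.
  by rewrite (ord1 j) mxE; apply/eqP; move: (H0 r); rewrite negbK.
have key : forall r, d r ord0 = (c r ord0 / c r0 ord0) * d r0 ord0.
  move=> r; set a := c r ord0 / c r0 ord0.
  have := A (delta_mx 0 r - a *: delta_mx 0 r0).
  rewrite !mulmxBl -!scalemxAl -!rowE !m11 !mxE /a.
  rewrite divfK // subrr eqxx => /esym/eqP/eqP.
  by rewrite subr_eq0 => /eqP.
exists (d r0 ord0 / c r0 ord0).
  rewrite mulf_eq0 invr_eq0 (negbTE cr0) orbF; apply: contraNneq cr0 => dr0.
  have : row r0 d == 0 by apply/eqP/matrixP => a b; rewrite (ord1 a) (ord1 b) !mxE key dr0 mulr0.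
  by rewrite -rowd => /eqP/matrixP/(_ ord0 ord0); rewrite !mxE => ->.
apply/matrixP => r j; have -> : j = ord0 by apply/val_inj; case: j => [[]].
rewrite [RHS]mxE (key r); ring.
Qed.
Lemma norm_ann (F : fieldType) m (c d : 'cV[F]_m) :
  ((first_nz c)^-1 *: c = (first_nz d)^-1 *: d) <->
  (forall u : 'rV_m, (u *m c == 0) = (u *m d == 0)).
Proof. by rewrite norm_eq_prop ann_prop. Qed.
Lemma m11E (F : fieldType) (x : 'M[F]_(1,1)) : (x == 0) = (x ord0 ord0 == 0).
Proof.
apply/eqP/eqP => [->|x0]; first by rewrite mxE.
by apply/matrixP => a b; rewrite (ord1 a) (ord1 b) x0 mxE.
Qed.
End LA.

Lemma prod_perm_at (T : finType) (I : eqType) (s : seq I) (f : I -> {perm T})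
  (A : pred T) (l : I) x :
  uniq s -> x \in A -> (forall l', l' != l -> forall y, y \in A -> f l' y = y) ->
  (forall y, y \in A -> f l y \in A) ->
  (\prod_(l' <- s) f l')%g x = if l \in s then f l x else x.
Proof.
move=> + xA fo fl; elim: s x xA => [|a s IH] x xA /=; first by rewrite big_nil perm1.
case/andP=> as_ us; rewrite big_cons permM in_cons.
have [e|al] := eqVneq a l.
  by move: as_; rewrite e => as_; rewrite /= IH ?fl // (negbTE as_).
by rewrite (fo _ al) // IH.
Qed.

Theorem lemma5p2 (p n k : nat) (H : {group {perm 'I_n}})
  (Omega : 'I_k -> {set 'I_n}) (i0 : 'I_k) (g1 : {perm 'I_n})
  (t : 'I_k -> {perm 'I_n}) (m : nat) (M : 'M['F_p]_(m, k)) :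
  prime p ->
  n = (p * k)%N ->
  injective Omega ->
  [set orbit 'P H x | x in [set: 'I_n]] = Omega @: [set: 'I_k] ->
  (forall i, #|Omega i| = p) ->
  (forall i, cyclic (constituent H (Omega i)) /\ #|constituent H (Omega i)| = p) ->
  generator (constituent H (Omega i0)) g1 ->
  t i0 = 1%g ->
  (forall i, i != i0 ->
     [/\ (t i * t i = 1)%g,
         {in Omega i0, forall x, t i x \in Omega i},
         (forall x, x \notin Omega i0 -> x \notin Omega i -> t i x = x) &
         (constituent H (Omega i0) :^ t i)%g = constituent H (Omega i)]) ->
  row_free M ->
  (forall v : 'rV['F_p]_k,
      (v <= M)%MS = (v \in gammaH p H (fun i => (g1 ^ t i)%g))) ->
  forall i j : 'I_k,
    orbit_equiv H (Omega i) (Omega j) <->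
    ((first_nz (col i M))^-1 *: col i M = (first_nz (col j M))^-1 *: col j M)%R.
Proof.
move=> pr_p _ injO hO cardO cycC gen1 t0 ht _ hM i j.
rewrite norm_ann.
pose g l := (g1 ^ t l)%g.
pose C l := constituent H (Omega l).
have S1 : forall l, exists y, Omega l = orbit 'P H y.
  move=> l; have : Omega l \in Omega @: [set: 'I_k] by apply: imset_f.
  by rewrite -hO => /imsetP[y _ ->]; exists y.
have S2 : forall l h x, h \in H -> x \in Omega l -> h x \in Omega l.
  move=> l h x hH; have [y ->] := S1 l.
  by rewrite -[h x]/('P%act x h) orbit_actr.
have S3 : forall l h, h \in H -> h \in ('N(Omega l | 'P))%g.
  move=> l h hH; apply/astabsP => x; rewrite /= apermE.
  apply/idP/idP => [hx|]; last exact: S2.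
  by rewrite -(permK h x) S2 ?groupV.
have S4 : forall x, exists l, x \in Omega l.
  move=> x; have : orbit 'P H x \in Omega @: [set: 'I_k] by rewrite -hO imset_f.
  by case/imsetP => l _ e; exists l; rewrite -e orbit_refl.
have S5 : forall l l' x, x \in Omega l -> x \in Omega l' -> l = l'.
  move=> l l' x; have [y ey] := S1 l; have [y' ey'] := S1 l'.
  rewrite ey ey' => /orbit_eqP e /orbit_eqP e'; apply: injO.
  by rewrite ey ey' -e -e'.
have S6 : forall l y, y \in C l -> exists2 h, h \in H & y = restr_perm (Omega l) h.
  by move=> l y /morphimP[h _ hH ->]; exists h.
have S6' : forall l h, h \in H -> restr_perm (Omega l) h \in C l.
  by move=> l h hH; apply: mem_morphim => //; apply: S3.
have S7 : forall l y x, y \in C l -> x \notin Omega l -> y x = x.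
  by move=> l y x /S6[h hH ->]; apply: out_perm; apply: restr_perm_on.
have S7' : forall l y x, y \in C l -> x \in Omega l -> y x \in Omega l.
  by move=> l y x /S6[h hH ->] xO; rewrite restr_permE ?S3 ?S2.
have S8 : forall l, C l = <[g l]>%g.
  move=> l; have e1 : C i0 = <[g1]>%g by apply/eqP.
  have [->|li] := eqVneq l i0; first by rewrite /g t0 conjg1.
  by have [_ _ _ e] := ht l li; rewrite /C -e -/(C i0) e1 cycleJ.
have S9 : forall l, #[g l]%g = p.
  by move=> l; rewrite /order -S8; case: (cycC l).
have gC : forall l e, (g l ^+ e)%g \in C l.
  by move=> l e; rewrite S8 groupX ?cycle_id.
pose P (v : 'rV['F_p]_k) := (\prod_(l < k) g l ^+ (v ord0 l : nat))%g.
have F1 : forall v l x, x \in Omega l -> P v x = (g l ^+ (v ord0 l : nat))%g x.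
  move=> v l x xO; rewrite /P (@prod_perm_at _ _ _ _ (mem (Omega l)) l) //.
  - by rewrite mem_index_enum.
  - exact: index_enum_uniq.
  - move=> l' ll' y yO; apply: (S7 l'); first exact: gC.
    by apply: contra ll' => yO'; rewrite (S5 _ _ _ yO' yO).
  - by move=> y yO; apply: S7'; first exact: gC.
have F2 : forall (v : 'rV['F_p]_k) l, (forall x, x \in Omega l -> (g l ^+ (v ord0 l : nat))%g x = x)
    <-> v ord0 l = 0%R.
  move=> v l; split => [triv|->]; last by move=> x _; rewrite expg0 perm1.
  have e1 : (g l ^+ (v ord0 l : nat))%g = 1%g.
    apply/permP => x; rewrite perm1; have [/triv //|xO] := boolP (x \in Omega l).
    by apply: (S7 l) => //; apply: gC.
  move/eqP: e1; rewrite -order_dvdn S9 => dv.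
  have lt : (v ord0 l : nat) < p by apply: (leq_trans (ltn_ord (v ord0 l))); rewrite Fp_cast.
  apply/val_inj => /=; move: dv lt; case: (nat_of_ord _) => // e.
  by move/dvdn_leq => /(_ isT) le1 lt; move: (leq_trans lt le1); rewrite ltnn.
pose Tr (h : {perm 'I_n}) l := forall x, x \in Omega l -> h x = x.
have TrP : forall (v : 'rV['F_p]_k) l, Tr (P v) l <-> v ord0 l = 0%R.
  move=> v l; apply: iff_trans (F2 v l).
  by split=> T x xO; [rewrite -(F1 v l x xO) | rewrite (F1 v l x xO)]; apply: T.
have S14 : forall h, h \in H -> exists v, P v = h.
  move=> h hH.
  have E : forall l, exists e : 'F_p, restr_perm (Omega l) h = (g l ^+ (e : nat))%g.
    move=> l; have /cycleP[e he] : restr_perm (Omega l) h \in <[g l]>%g by rewrite -S8 S6'.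
    have lt : e %% p < (Zp_trunc (pdiv p)).+2 by rewrite Fp_cast // ltn_pmod ?prime_gt0.
    by exists (Ordinal lt); rewrite he /= -{1}(expg_mod_order (g l) e) S9.
  have [f hf] := fin_all_exists E.
  exists (\row_l f l)%R; apply/permP => x; have [l xO] := S4 x.
  by rewrite (F1 _ l x xO) mxE -hf restr_permE ?S3.
have S13 : forall l h z, h \in H -> z \in Omega l -> h z = z -> Tr h l.
  move=> l h z hH zO hz x xO.
  have [h' h'H h'z] : exists2 h', h' \in H & h' z = x.
    have [y ey] := S1 l; move: zO xO; rewrite ey => /orbit_eqP <- /orbitP[a aH <-].
    by exists a.
  have ab : abelian (C l) by rewrite S8 cycle_abelian.
  have cm := (centsP ab) _ (S6' l h hH) _ (S6' l h' h'H).
  rewrite -(restr_permE (S3 l h hH) xO) -h'z -(restr_permE (S3 l h' h'H) zO).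
  rewrite -permM -cm permM (restr_permE (S3 l h hH) zO) hz.
  by rewrite restr_permE ?S3.
have colv : forall (u : 'rV_m) l, (u *m col l M == 0)%R = ((u *m M)%R ord0 l == 0)%R.
  move=> u l; rewrite colE mulmxA -colE.
  have o1 : forall a : 'I_1, a = ord0 by move=> a; apply/val_inj; case: a => [[]].
  by rewrite m11E mxE.
have K : (forall u : 'rV_m, (u *m col i M == 0)%R = (u *m col j M == 0)%R) <->
         (forall h, h \in H -> Tr h i <-> Tr h j).
  split => [A h hH|A u].
    have [v ePv] := S14 h hH.
    have : (v <= M)%MS by rewrite hM inE -/(P v) ePv.
    case/submxP => u ev; rewrite -ePv; have := A u; rewrite !colv -ev => Au.
    split => /TrP/eqP T; apply/TrP/eqP; [by rewrite -Au | by rewrite Au].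
  have PH : P (u *m M)%R \in H by move: (hM (u *m M)%R); rewrite submxMl inE.
  rewrite !colv; apply/eqP/eqP => /TrP T; apply/TrP; by apply/(A _ PH).
apply: iff_trans (iff_sym K).
have trans : forall l z x, z \in Omega l -> x \in Omega l -> exists2 h, h \in H & h z = x.
  move=> l z x zO xO.
  have [y ey] := S1 l; move: zO xO; rewrite ey => /orbit_eqP <- /orbitP[a aH <-].
  by exists a.
split.
  case=> psi [inj im hom] h hH; split.
    move=> Ti y; rewrite -im => /imsetP[d dO ->]; by rewrite -hom // Ti.
  move=> Tj x xO; apply: inj; [exact: S2 | exact: xO |].
  by rewrite hom // Tj // -im imset_f.
move=> A.
have [a aO] : exists a, a \in Omega i.
  by apply/card_gt0P; rewrite cardO prime_gt0.
have [b bO] : exists b, b \in Omega j.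
  by apply/card_gt0P; rewrite cardO prime_gt0.
have W : forall l1 l2 a b, a \in Omega l1 -> b \in Omega l2 ->
    (forall h, h \in H -> Tr h l1 -> Tr h l2) ->
    forall h h', h \in H -> h' \in H -> h a = h' a -> h b = h' b.
  move=> l1 l2 a' b' aO' bO' T h h' hH h'H e.
  have qH : (h * h'^-1)%g \in H by rewrite groupM ?groupV.
  have qa : (h * h'^-1)%g a' = a' by rewrite permM e permK.
  have := T _ qH (S13 _ _ _ qH aO' qa) b' bO'.
  by rewrite permM => /(f_equal h'); rewrite permKV.
pose psi x := if [pick h in H | h a == x] is Some h then h b else x.
have psiE : forall h, h \in H -> psi (h a) = h b.
  move=> h hH; rewrite /psi; case: pickP => [h0 /andP[h0H /eqP e]|none].
    by apply: (W i j a b) => // h1 h1H; case: (A h1 h1H).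
  by move: (none h); rewrite hH eqxx.
exists psi; split.
- move=> x x' xO x'O.
  have [h hH <-] := trans i a x aO xO; have [h' h'H <-] := trans i a x' aO x'O.
  rewrite !psiE // => e; apply: (W j i b a) => // h1 h1H; case: (A h1 h1H) => _; apply.
- apply/setP => y; apply/imsetP/idP => [[x xO ->]|yO].
    by have [h hH <-] := trans i a x aO xO; rewrite psiE // S2.
  have [h hH <-] := trans j b y bO yO.
  by exists (h a); rewrite ?psiE ?S2.
- move=> h hH d dO; have [h0 h0H <-] := trans i a d aO dO.
  by rewrite -permM !psiE ?groupM // permM.
Qed.
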